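(* Let $\{S(t)\}_{t\ge0}$ be a dissipative semigroup on a complete metric space $(X,d)$ and let $\mathcal{B}_0$ be a positively invariant bounded absorbing set. Assume there exist a constant $T>0$, a constant $\eta\in[0,1)$, a function $g:(\mathbb{R}^+)^m\to\mathbb{R}^+$, a function $\phi:X\times X\to\mathbb{R}^+$ and pseudometrics $\varrho_1,\dots,\varrho_m$ on $\mathcal{B}_0$ such that: (i) $g$ is non-decreasing in each variable, $g(0,\dots,0)=0$, and $g$ is continuous at $(0,\dots,0)$; (ii) for every sequence $\{y_n\}\subseteq\mathcal{B}_0$ there is a subsequence $\{y_{n_k}\}$ with $\lim_{k\to\infty}\lim_{l\to\infty}\phi(y_{n_k},y_{n_l})=0$; (iii) each $\varrho_i$ is precompact on $\mathcal{B}_0$, i.e. every sequence in $\mathcal{B}_0$ has a subsequence which is Cauchy with respect to $\varrho_i$; (iv) for all $y_1,y_2\in\mathcal{B}_0$, $$d(S(T)y_1,S(T)y_2)\le\eta\, d(y_1,y_2)+g\big(\varrho_1(y_1,y_2),\dots,\varrho_m(y_1,y_2)\big)+\phi(y_1,y_2).$$ Then $(X,\{S(t)\}_{t\ge0})$ is exponentially decaying with respect to the noncompactness measure, and for every bounded $B\subseteq X$, $$\alpha(S(t)B)\le2\eta^{\frac{t-t_*(B)-T}{T}}\alpha(\mathcal{B}_0)\quad\forall t\ge t_*(B)+T,$$ where $t_*(B)$ satisfies $S(t)B\subseteq\mathcal{B}_0$ for all $t\ge t_*(B)$.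
   Context: A semigroup consists of continuous maps $S(t):X\to X$ with $S(0)=I$, $S(t+s)=S(t)S(s)$; it is dissipative if it has a bounded absorbing set (a closed set $\mathcal{B}$ such that every bounded $B$ satisfies $S(t)B\subseteq\mathcal{B}$ for all large $t$); positively invariant means $S(t)\mathcal{B}_0\subseteq\mathcal{B}_0$ for $t\ge0$. $\alpha$ is the Kuratowski measure of noncompactness, $\alpha(B)=\inf\{\delta>0:B\text{ has a finite cover by sets of diameter}<\delta\}$. The system is exponentially decaying with respect to the noncompactness measure if it is dissipative and there are $t_0>0$ and constants $C,\beta>0$ with $\alpha(S(t)\mathcal{B}_0)\le Ce^{-\beta t}$ for all $t\ge t_0$, for a positively invariant bounded absorbing set $\mathcal{B}_0$. *)

(* Defs.v *)
From Stdlib Require Import Reals Lra.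
From Coquelicot Require Import Coquelicot.
Open Scope R_scope.

Section Defs.
Context {X : Type} (d : X -> X -> R).

Definition is_metric : Prop :=
  (forall x y, 0 <= d x y) /\ (forall x y, d x y = 0 <-> x = y) /\
  (forall x y, d x y = d y x) /\ (forall x y z, d x z <= d x y + d y z).

Definition cauchy_seq (u : nat -> X) : Prop :=
  forall eps, 0 < eps -> exists N, forall n p, (N <= n)%nat -> (N <= p)%nat -> d (u n) (u p) < eps.

Definition converges_to (u : nat -> X) (x : X) : Prop :=
  forall eps, 0 < eps -> exists N, forall n, (N <= n)%nat -> d (u n) x < eps.

Definition complete_metric : Prop :=
  forall u, cauchy_seq u -> exists x, converges_to u x.

Definition continuous_map (f : X -> X) : Prop :=
  forall x eps, 0 < eps -> exists delta, 0 < delta /\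
    forall y, d x y < delta -> d (f x) (f y) < eps.

Definition closed_set (A : X -> Prop) : Prop :=
  forall u x, (forall n, A (u n)) -> converges_to u x -> A x.

Definition bounded_set (A : X -> Prop) : Prop :=
  exists x0 r, forall x, A x -> d x0 x <= r.

Definition subset (A B : X -> Prop) : Prop := forall x, A x -> B x.

Definition image (f : X -> X) (A : X -> Prop) : X -> Prop :=
  fun y => exists x, A x /\ y = f x.

Definition is_semigroup (S : R -> X -> X) : Prop :=
  (forall t, 0 <= t -> continuous_map (S t)) /\
  (forall x, S 0 x = x) /\
  (forall t s x, 0 <= t -> 0 <= s -> S (t + s) x = S t (S s x)).

Definition absorbing (S : R -> X -> X) (B0 : X -> Prop) : Prop :=
  closed_set B0 /\
  forall B, bounded_set B -> exists t0, 0 <= t0 /\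
    forall t, t0 <= t -> subset (image (S t) B) B0.

Definition dissipative (S : R -> X -> X) : Prop :=
  exists B0, bounded_set B0 /\ absorbing S B0.

Definition pos_invariant (S : R -> X -> X) (B0 : X -> Prop) : Prop :=
  forall t, 0 <= t -> subset (image (S t) B0) B0.

(* diameter (sup of distances; -oo for the empty set) *)
Definition diam (A : X -> Prop) : Rbar :=
  Lub_Rbar (fun r => exists x y, A x /\ A y /\ r = d x y).

Definition kuratowski (B : X -> Prop) : Rbar :=
  Glb_Rbar (fun delta => 0 < delta /\
    exists (n : nat) (F : nat -> X -> Prop),
      (forall i, (i < n)%nat -> Rbar_lt (diam (F i)) delta) /\
      (forall x, B x -> exists i, (i < n)%nat /\ F i x)).

Definition exp_decaying (S : R -> X -> X) (B0 : X -> Prop) : Prop :=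
  dissipative S /\ pos_invariant S B0 /\ bounded_set B0 /\ absorbing S B0 /\
  exists t0 C beta, 0 < t0 /\ 0 < C /\ 0 < beta /\
    forall t, t0 <= t -> Rbar_le (kuratowski (image (S t) B0)) (C * exp (- beta * t)).

Definition pseudometric_on (A : X -> Prop) (rho : X -> X -> R) : Prop :=
  (forall x y, A x -> A y -> 0 <= rho x y) /\
  (forall x, A x -> rho x x = 0) /\
  (forall x y, A x -> A y -> rho x y = rho y x) /\
  (forall x y z, A x -> A y -> A z -> rho x z <= rho x y + rho y z).

Definition strictly_incr (nu : nat -> nat) : Prop := forall n, (nu n < nu (S n))%nat.

End Defs.

(* real power a^x for a >= 0, with the convention 0^0 = 1 and 0^x = 0 for x <> 0 *)
Definition rpow (a x : R) : R :=
  if Rlt_dec 0 a then Rpower a x else if Req_EM_T x 0 then 1 else 0.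

(* Main.v *)
Require Import Defs.
From Stdlib Require Import Reals.
From Coquelicot Require Import Coquelicot.
From Stdlib Require Import Lra Lia List Classical IndefiniteDescription ZArith.
Open Scope R_scope.

Section H.
Context {X : Type}.

Lemma si_mono mu : strictly_incr mu -> forall a b, (a < b)%nat -> (mu a < mu b)%nat.
Proof. intros H a b Hab. induction Hab. apply H. specialize (H m). lia. Qed.
Lemma si_ge mu : strictly_incr mu -> forall n, (n <= mu n)%nat.
Proof. intros H n; induction n. lia. specialize (H n); lia. Qed.
Lemma si_comp mu nu : strictly_incr mu -> strictly_incr nu -> strictly_incr (fun k => mu (nu k)).
Proof. intros H1 H2 n. apply si_mono; auto. Qed.

Lemma subseq_exists (P : nat -> Prop) : (forall N, exists k, (N <= k)%nat /\ P k) ->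
  exists mu, strictly_incr mu /\ forall k, P (mu k).
Proof.
  intros H. destruct (functional_choice _ H) as [f Hf].
  exists (nat_rect (fun _ => nat) (f O) (fun _ m => f (S m))). split.
  - intros n. simpl. destruct (Hf (S (nat_rect (fun _ => nat) (f O) (fun _ m => f (S m)) n))). lia.
  - intros [|k]; simpl; apply Hf.
Qed.

Lemma bounded_ex (P : nat -> nat -> Prop) m :
  (forall i, (i < m)%nat -> exists N, forall k, (N <= k)%nat -> P i k) ->
  exists N, forall i, (i < m)%nat -> forall k, (N <= k)%nat -> P i k.
Proof.
  induction m; intros H.
  - exists O. intros; lia.
  - destruct IHm as [N1 H1]. { intros i Hi; apply H; lia. }
    destruct (H m (Nat.lt_succ_diag_r m)) as [N2 H2].
    exists (Nat.max N1 N2). intros i Hi k Hk.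
    destruct (Nat.eq_dec i m) as [->|Hne]. apply H2; lia. apply H1; lia.
Qed.

Definition ev2 (f : X -> X -> R) (c : R) (z : nat -> X) : Prop :=
  exists N, forall k, (N <= k)%nat -> exists M, forall l, (M <= l)%nat -> f (z k) (z l) < c.

Lemma ev2_sub f c z mu : ev2 f c z -> strictly_incr mu -> ev2 f c (fun k => z (mu k)).
Proof.
  intros [N HN] Hmu. exists N. intros k Hk.
  destruct (HN (mu k)) as [M HM]. pose proof (si_ge mu Hmu k); lia.
  exists M. intros l Hl. apply HM. pose proof (si_ge mu Hmu l); lia.
Qed.

Lemma cauchy_sub (f : X -> X -> R) z mu : cauchy_seq f z -> strictly_incr mu -> cauchy_seq f (fun k => z (mu k)).
Proof.
  intros H Hmu e He. destruct (H e He) as [N HN]. exists N. intros n p Hn Hp.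
  apply HN; pose proof (si_ge mu Hmu n); pose proof (si_ge mu Hmu p); lia.
Qed.

Definition goodseq (d : X -> X -> R) (K : X -> Prop) (r : R) : Prop :=
  forall y, (forall n, K (y n)) -> exists mu, strictly_incr mu /\ ev2 d r (fun k => y (mu k)).

Lemma goodseq_mono d K K' r r' : (forall x, K' x -> K x) -> r <= r' -> goodseq d K r -> goodseq d K' r'.
Proof.
  intros HK Hr Hg y Hy. destruct (Hg y (fun n => HK _ (Hy n))) as [mu [Hmu [N HN]]].
  exists mu. split; auto. exists N. intros k Hk. destruct (HN k Hk) as [M HM].
  exists M. intros l Hl. specialize (HM l Hl). lra.
Qed.

Lemma diam_lt (d : X -> X -> R) F (a : R) x y : Rbar_lt (diam d F) a -> F x -> F y -> d x y < a.
Proof.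
  intros H Fx Fy. unfold diam in H.
  destruct (Lub_Rbar_correct (fun r => exists x y, F x /\ F y /\ r = d x y)) as [Hub _].
  specialize (Hub (d x y) (ex_intro _ x (ex_intro _ y (conj Fx (conj Fy eq_refl))))).
  exact (Rbar_le_lt_trans _ _ _ Hub H).
Qed.

Lemma cover_good d K (a : R) n F : (forall i, (i<n)%nat -> Rbar_lt (diam d (F i)) a) ->
  (forall x, K x -> exists i, (i<n)%nat /\ F i x) -> goodseq d K a.
Proof.
  intros HF Hc y Hy.
  destruct (functional_choice (fun k i => (i<n)%nat /\ F i (y k)) (fun k => Hc _ (Hy k))) as [c Hcc].
  assert (Hpig: exists i, (i<n)%nat /\ forall N, exists k, (N<=k)%nat /\ c k = i).
  { apply NNPP; intro Hn.
    assert (H1: forall i, (i<n)%nat -> exists N, forall k, (N<=k)%nat -> c k <> i).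
    { intros i Hi. apply NNPP; intro H2. apply Hn. exists i. split; auto. intro N.
      apply NNPP; intro H3. apply H2. exists N. intros k Hk Hck. apply H3. exists k. auto. }
    destruct (bounded_ex _ _ H1) as [N HN].
    destruct (Hcc N) as [Hlt _]. exact (HN (c N) Hlt N (le_n N) eq_refl). }
  destruct Hpig as [i [Hi Hinf]].
  destruct (subseq_exists _ Hinf) as [mu [Hmu Hmuc]].
  exists mu. split; auto. exists O. intros k _. exists O. intros l _.
  apply (diam_lt d (F i)). apply HF; auto.
  rewrite <- (Hmuc k). apply Hcc. rewrite <- (Hmuc l). apply Hcc.
Qed.

Lemma good_cover d K r delta : is_metric d -> 0 < r -> 2*r < delta -> goodseq d K r ->
  exists n F, (forall i, (i<n)%nat -> Rbar_lt (diam d (F i)) delta) /\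
              (forall x, K x -> exists i, (i<n)%nat /\ F i x).
Proof.
  intros [Hpos [Hid [Hsym Htri]]] Hr Hd Hg.
  set (r2 := (r + delta/2)/2).
  apply NNPP; intro Hno.
  assert (Hh: forall l : list X, exists x, K x /\ forall y, In y l -> r2 <= d y x).
  { intro l. apply NNPP; intro H1. apply Hno.
    exists (length l), (fun i z => exists y, nth_error l i = Some y /\ d y z < r2).
    split.
    - intros i Hi. apply Rbar_le_lt_trans with (Finite (2*r2)); [| simpl; unfold r2; lra].
      unfold diam. apply (proj2 (Lub_Rbar_correct _)).
      intros s [x [y [[y0 [e0 h0]] [[y1 [e1 h1]] ->]]]].
      rewrite e0 in e1; injection e1 as <-. simpl.
      specialize (Htri x y0 y). rewrite (Hsym x y0) in Htri. lra.
    - intros x Kx. apply NNPP; intro H2. apply H1. exists x. split; auto.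
      intros y Hy. destruct (In_nth_error _ _ Hy) as [i Hi]. apply Rnot_lt_le. intro H3.
      apply H2. exists i. split. apply nth_error_Some; congruence. exists y; auto. }
  destruct (functional_choice _ Hh) as [h Hhp].
  set (build := nat_rect (fun _ => list X) nil (fun _ l => l ++ h l :: nil)).
  set (x := fun n => h (build n)).
  assert (Hin: forall n j, (j < n)%nat -> In (x j) (build n)).
  { induction n; intros j Hj. lia. simpl. apply in_or_app.
    destruct (Nat.eq_dec j n) as [->|Hne]. right; left; reflexivity. left; apply IHn; lia. }
  destruct (Hg x (fun n => proj1 (Hhp _))) as [mu [Hmu [N HN]]].
  destruct (HN N (le_n N)) as [M HM].
  specialize (HM (Nat.max M (S N)) ltac:(lia)).
  assert (Hlt: (mu N < mu (Nat.max M (S N)))%nat) by (apply si_mono; auto; lia).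
  pose proof (proj2 (Hhp (build (mu (Nat.max M (S N))))) _ (Hin _ _ Hlt)).
  unfold x in *. unfold r2 in *. clear -HM H Hd. lra.
Qed.

Lemma glb_le (E : R -> Prop) (c : R) : (forall delta, c < delta -> E delta) -> Rbar_le (Glb_Rbar E) c.
Proof.
  intros H. generalize (Glb_Rbar_correct E); generalize (Glb_Rbar E); intros l [Hlb _].
  destruct l as [l| |]; simpl; auto.
  - apply Rnot_lt_le; intro Hc. specialize (Hlb ((l+c)/2) (H ((l+c)/2) ltac:(lra))). simpl in Hlb. lra.
  - exact (Hlb (c+1) (H (c+1) ltac:(lra))).
Qed.

End H.

Theorem theorem4p7 (X : Type) (d : X -> X -> R) (S : R -> X -> X) (B0 : X -> Prop)
  (T eta : R) (m : nat) (g : (nat -> R) -> R) (phi : X -> X -> R)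
  (rho : nat -> X -> X -> R) :
  is_metric d -> complete_metric d -> is_semigroup d S -> dissipative d S ->
  bounded_set d B0 -> absorbing d S B0 -> pos_invariant S B0 ->
  0 < T -> 0 <= eta -> eta < 1 ->
  (* g : (R^+)^m -> R^+ *)
  (forall u, (forall i, (i < m)%nat -> 0 <= u i) -> 0 <= g u) ->
  (* (i) *)
  (forall u v, (forall i, (i < m)%nat -> 0 <= u i /\ u i <= v i) -> g u <= g v) ->
  g (fun _ => 0) = 0 ->
  (forall eps, 0 < eps -> exists delta, 0 < delta /\
     forall u, (forall i, (i < m)%nat -> 0 <= u i < delta) -> g u < eps) ->
  (* phi : X x X -> R^+ *)
  (forall x y, 0 <= phi x y) ->
  (* (ii) *)
  (forall y : nat -> X, (forall n, B0 (y n)) ->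
     exists nu : nat -> nat, strictly_incr nu /\
       exists L : nat -> R,
         (forall k, is_lim_seq (fun l => phi (y (nu k)) (y (nu l))) (L k)) /\
         is_lim_seq L 0) ->
  (* (iii) *)
  (forall i, (i < m)%nat -> pseudometric_on B0 (rho i)) ->
  (forall i, (i < m)%nat -> forall y : nat -> X, (forall n, B0 (y n)) ->
     exists nu : nat -> nat, strictly_incr nu /\ cauchy_seq (rho i) (fun k => y (nu k))) ->
  (* (iv) *)
  (forall y1 y2, B0 y1 -> B0 y2 ->
     d (S T y1) (S T y2) <= eta * d y1 y2 + g (fun i => rho i y1 y2) + phi y1 y2) ->
  exp_decaying d S B0 /\
  (forall B, bounded_set d B -> forall tstar, 0 <= tstar ->
     (forall t, tstar <= t -> subset (image (S t) B) B0) ->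
     forall t, tstar + T <= t ->
       Rbar_le (kuratowski d (image (S t) B))
               (Rbar_mult (2 * rpow eta ((t - tstar - T) / T)) (kuratowski d B0))).
Proof.
  intros Hmet Hcomp Hsg Hdiss Hbd Habs Hpinv HT Heta0 Heta1 Hgpos Hgmono Hg0 Hgcont
    Hphipos Hphi Hrho Hrhoc Hiv.
  pose proof Hmet as [Hdpos [Hdid [Hdsym Hdtri]]].
  destruct Hsg as [_ [HS0 HSadd]].
  assert (Hphi': forall y, (forall n, B0 (y n)) -> exists mu, strictly_incr mu /\
            forall e, 0 < e -> ev2 phi e (fun k => y (mu k))).
  { intros y Hy. destruct (Hphi y Hy) as [mu [Hmu [L [HL1 HL2]]]]. exists mu; split; auto.
    intros e He.
    apply is_lim_seq_spec in HL2. destruct (HL2 (mkposreal (e/2) ltac:(lra))) as [N HN].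
    exists N. intros k Hk.
    specialize (HL1 k). apply is_lim_seq_spec in HL1.
    destruct (HL1 (mkposreal (e/2) ltac:(lra))) as [M HM]. exists M. intros l Hl.
    specialize (HN k Hk). specialize (HM l Hl). simpl in *.
    apply Rabs_def2 in HN; apply Rabs_def2 in HM. lra. }
  assert (Hrhoall: forall m', (m' <= m)%nat -> forall y, (forall n, B0 (y n)) ->
            exists mu, strictly_incr mu /\
            forall i, (i < m')%nat -> cauchy_seq (rho i) (fun k => y (mu k))).
  { induction m'; intros Hm y Hy.
    - exists (fun k => k). split. intro n; lia. intros; lia.
    - destruct (IHm' ltac:(lia) y Hy) as [mu [Hmu Hc]].
      destruct (Hrhoc m' ltac:(lia) (fun k => y (mu k)) (fun n => Hy _)) as [nu [Hnu Hc2]].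
      exists (fun k => mu (nu k)). split. apply si_comp; auto.
      intros i Hi. destruct (Nat.eq_dec i m') as [->|Hne]. exact Hc2.
      apply (cauchy_sub (rho i) (fun k => y (mu k)) nu); auto. apply Hc; lia. }
  assert (Hone: forall K r e, (forall x, K x -> B0 x) -> goodseq d K r -> 0 < e ->
            goodseq d (image (S T) K) (eta*r + e)).
  { intros K r e HK Hg He x Hx. unfold image in Hx.
    destruct (functional_choice (fun n y => K y /\ x n = S T y) Hx) as [y Hy].
    assert (HyB: forall n, B0 (y n)) by (intro n; apply HK, Hy).
    destruct (Hg y (fun n => proj1 (Hy n))) as [mu1 [Hmu1 Hd1]].
    destruct (Hrhoall m (le_n m) (fun k => y (mu1 k)) (fun n => HyB _)) as [mu2 [Hmu2 Hr2]].
    destruct (Hphi' (fun k => y (mu1 (mu2 k))) (fun n => HyB _)) as [mu3 [Hmu3 Hp3]].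
    exists (fun k => mu1 (mu2 (mu3 k))). split. apply si_comp; auto. apply si_comp; auto.
    set (z := fun k => y (mu1 (mu2 (mu3 k)))).
    assert (Hdz: ev2 d r z).
    { unfold z. apply (ev2_sub d r (fun k => y (mu1 (mu2 k))) mu3); auto.
      apply (ev2_sub d r (fun k => y (mu1 k)) mu2); auto. }
    assert (Hrz: forall i, (i < m)%nat -> cauchy_seq (rho i) z).
    { intros i Hi. apply (cauchy_sub (rho i) (fun k => y (mu1 (mu2 k))) mu3); auto. }
    destruct (Hgcont (e/2) ltac:(lra)) as [dl [Hdl Hgdl]].
    destruct (bounded_ex (fun i N' => forall k l, (N' <= k)%nat -> (N' <= l)%nat ->
                 rho i (z k) (z l) < dl) m) as [Nr HNr].
    { intros i Hi. destruct (Hrz i Hi dl Hdl) as [N HN]. exists N. intros N' HN' k l Hk Hl.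
      apply HN; lia. }
    destruct Hdz as [Nd HNd].
    destruct (Hp3 (e/2) ltac:(lra)) as [Np HNp].
    exists (Nat.max Nd (Nat.max Np Nr)). intros k Hk.
    destruct (HNd k ltac:(lia)) as [Md HMd]. destruct (HNp k ltac:(lia)) as [Mp HMp].
    exists (Nat.max Md (Nat.max Mp Nr)). intros l Hl.
    rewrite (proj2 (Hy _)), (proj2 (Hy (mu1 (mu2 (mu3 l))))).
    specialize (Hiv (z k) (z l) (HyB _) (HyB _)).
    assert (Hgl: g (fun i => rho i (z k) (z l)) < e/2).
    { apply Hgdl. intros i Hi. split.
      - destruct (Hrho i Hi) as [Hp _]. apply Hp; apply HyB.
      - apply (HNr i Hi Nr (le_n _)); lia. }
    specialize (HMd l ltac:(lia)). specialize (HMp l ltac:(lia)).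
    assert (eta * d (z k) (z l) <= eta * r) by (apply Rmult_le_compat_l; lra).
    unfold z in *. lra. }
  assert (Hiter: forall n K r, (forall x, K x -> B0 x) -> goodseq d K r -> forall e, 0 < e ->
            goodseq d (image (S (INR n * T)) K) (eta^n * r + e)).
  { induction n; intros K r HK Hg e He.
    - simpl. eapply goodseq_mono; [| | exact Hg].
      + intros x [y [Hy ->]]. rewrite Rmult_0_l, HS0. auto.
      + lra.
    - assert (Hsub: forall x, image (S (INR n * T)) K x -> B0 x).
      { intros x [y [Hy ->]]. apply (Hpinv (INR n * T)).
        apply Rmult_le_pos; [apply pos_INR| lra]. exists y; auto. }
      specialize (IHn K r HK Hg (e/2) ltac:(lra)).
      specialize (Hone _ _ (e/2) Hsub IHn ltac:(lra)).
      eapply goodseq_mono; [| | exact Hone].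
      + intros x [y [Hy ->]]. exists (S (INR n * T) y). split. exists y; auto.
        rewrite S_INR. replace ((INR n + 1) * T) with (T + INR n * T) by ring.
        apply HSadd. lra. apply Rmult_le_pos; [apply pos_INR| lra].
      + simpl. assert (eta * (e/2) <= e/2) by nra. nra. }
  assert (HE0: exists a0, kuratowski d B0 = Finite a0 /\ 0 <= a0 /\
     forall e, 0 < e -> exists a, a < a0 + e /\ 0 < a /\ exists n F,
       (forall i, (i<n)%nat -> Rbar_lt (diam d (F i)) a) /\
       (forall x, B0 x -> exists i, (i<n)%nat /\ F i x)).
  { destruct Hbd as [x0 [R0 HR0]].
    pose (a1 := 2 * Rabs R0 + 1).
    assert (H1: 0 < a1 /\ exists (n : nat) (F : nat -> X -> Prop),
       (forall i, (i<n)%nat -> Rbar_lt (diam d (F i)) a1) /\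
       (forall x, B0 x -> exists i, (i<n)%nat /\ F i x)).
    { split. unfold a1; pose proof (Rabs_pos R0); lra.
      exists 1%nat, (fun _ => B0). split.
      - intros i Hi. apply Rbar_le_lt_trans with (Finite (2 * Rabs R0)); [| simpl; unfold a1; lra].
        unfold diam. apply (proj2 (Lub_Rbar_correct _)).
        intros s [x [y [Hx [Hy ->]]]]. simpl.
        pose proof (HR0 x Hx). pose proof (HR0 y Hy). pose proof (Hdtri x x0 y).
        rewrite (Hdsym x x0) in *. pose proof (Rle_abs R0). lra.
      - intros x Hx. exists O. split; auto. }
    unfold kuratowski.
    match goal with |- context [Glb_Rbar ?E] => generalize (Glb_Rbar_correct E); generalize (Glb_Rbar E) end.
    intros l [Hlb Hglb].
    assert (Hl0: Rbar_le 0 l).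
    { apply Hglb. intros x [Hx _]. simpl. lra. }
    pose proof (Hlb _ H1) as Hl1.
    destruct l as [a0| |]; simpl in Hl0, Hl1; try contradiction.
    exists a0. split; auto. split; auto.
    intros e He. apply NNPP; intro Hno.
    assert (Hlb2: Rbar_le (a0 + e) a0).
    { apply Hglb. intros a [Ha Hc]. simpl. apply Rnot_lt_le; intro Hlt. apply Hno.
      exists a. split; auto. }
    simpl in Hlb2. lra. }
  destruct HE0 as [a0 [Hk0 [Ha0 Happ]]].
  assert (Hsec: forall B, bounded_set d B -> forall tstar, 0 <= tstar ->
     (forall t, tstar <= t -> subset (image (S t) B) B0) ->
     forall t, tstar + T <= t ->
       Rbar_le (kuratowski d (image (S t) B))
               (Rbar_mult (2 * rpow eta ((t - tstar - T) / T)) (kuratowski d B0))).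
  { intros B _ tstar Hts Hsub t Ht.
    set (e := (t - tstar - T) / T).
    assert (He0: 0 <= e) by (unfold e; apply Rdiv_le_0_compat; lra).
    destruct (archimed e) as [Hup1 Hup2].
    assert (Hupos: (0 < up e)%Z) by (apply lt_0_IZR; lra).
    set (n := Z.to_nat (up e)).
    assert (Hn: INR n = IZR (up e)) by (unfold n; rewrite INR_IZR_INZ, Z2Nat.id; [reflexivity|lia]).
    assert (Hn1: e <= INR n) by lra.
    assert (Hn2: INR n * T <= t - tstar).
    { assert (Hh: INR n <= e + 1) by lra. unfold e in Hh.
      replace (t - tstar) with (((t - tstar - T)/T + 1) * T) by (field; lra).
      apply Rmult_le_compat_r; lra. }
    set (s := t - INR n * T).
    assert (Hs: tstar <= s) by (unfold s; lra).
    set (A := image (S s) B).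
    assert (HA: forall x, A x -> B0 x) by (intros x Hx; apply (Hsub s Hs); exact Hx).
    assert (Hpn: 0 <= eta ^ n) by (apply pow_le; lra).
    assert (Hkey: forall a, 0 < a -> (exists n0 F, (forall i, (i<n0)%nat -> Rbar_lt (diam d (F i)) a) /\ (forall x, B0 x -> exists i, (i<n0)%nat /\ F i x)) ->
        forall delta, 2 * eta^n * a < delta -> 0 < delta /\ exists n0 F, (forall i, (i<n0)%nat -> Rbar_lt (diam d (F i)) delta) /\ (forall x, image (S t) B x -> exists i, (i<n0)%nat /\ F i x)).
    { intros a Ha [n0 [F [HF HFc]]] delta Hdelta.
      assert (Hga: goodseq d A a).
      { eapply goodseq_mono; [exact HA | apply Rle_refl | ]. exact (cover_good d B0 a n0 F HF HFc). }
      set (ep := (delta - 2 * eta^n * a)/4).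
      assert (Hep: 0 < ep) by (unfold ep; lra).
      pose proof (Hiter n A a HA Hga ep Hep) as Hg2.
      split. nra.
      apply (good_cover d _ (eta^n * a + ep) delta Hmet). nra. unfold ep; lra.
      eapply goodseq_mono; [| apply Rle_refl | exact Hg2].
      intros x [y [Hy ->]]. exists (S s y). split. exists y; auto.
      replace t with (INR n * T + s) at 1 by (unfold s; ring).
      apply HSadd. apply Rmult_le_pos; [apply pos_INR|lra]. lra. }
    assert (Hle1: eta ^ n <= 1).
    { destruct (Nat.eq_dec n 0) as [E0|E0]. rewrite E0; simpl; lra.
      left. apply pow_lt_1_compat. lra. lia. }
    assert (Hrp: eta ^ n <= rpow eta e).
    { unfold rpow. destruct (Rlt_dec 0 eta) as [Hp|Hnp].
      + rewrite <- (Rpower_pow n eta Hp). unfold Rpower.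
        assert (Hl: ln eta < 0) by (rewrite <- ln_1; apply ln_increasing; lra).
        assert (Hm: INR n * ln eta <= e * ln eta) by nra.
        destruct (Rle_lt_or_eq_dec _ _ Hm) as [Hl2|Heq].
        left; apply exp_increasing; exact Hl2. rewrite Heq; lra.
      + assert (Heq: eta = 0) by lra. destruct (Req_EM_T e 0). lra.
        rewrite Heq. rewrite pow_i. lra.
        destruct (Nat.eq_dec n 0) as [E0|E0]; [|lia]. rewrite E0 in Hn1. simpl in Hn1. lra. }
    assert (Hrp0: 0 <= rpow eta e) by lra.
    rewrite Hk0.
    replace (Rbar_mult (2 * rpow eta e) (Finite a0)) with (Finite (2 * rpow eta e * a0)) by reflexivity.
    unfold kuratowski. apply glb_le. intros delta Hdelta.
    set (ep' := (delta - 2 * rpow eta e * a0)/4).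
    assert (Hep': 0 < ep') by (unfold ep'; lra).
    destruct (Happ ep' Hep') as [a [Ha1 [Ha2 Hcov]]].
    apply (Hkey a Ha2 Hcov delta).
    assert (eta ^ n * a <= eta ^ n * (a0 + ep')) by (apply Rmult_le_compat_l; lra).
    assert (eta ^ n * a0 <= rpow eta e * a0) by (apply Rmult_le_compat_r; lra).
    assert (eta ^ n * ep' <= ep') by nra.
    unfold ep' in *. lra. }
  split; [| exact Hsec].
  unfold exp_decaying. split; auto. split; auto. split; auto. split; auto.
  assert (Hb: forall t, T <= t -> Rbar_le (kuratowski d (image (S t) B0)) (2 * rpow eta ((t - 0 - T)/T) * a0)).
  { intros t Ht. pose proof (Hsec B0 Hbd 0 (Rle_refl 0) (fun t Ht => Hpinv t Ht) t ltac:(lra)) as H.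
    rewrite Hk0 in H. exact H. }
  destruct (Rlt_dec 0 eta) as [Hp|Hnp].
  - assert (Hl: ln eta < 0) by (rewrite <- ln_1; apply ln_increasing; lra).
    exists T, (2 * a0 / eta + 1), (- ln eta / T).
    split; [lra|]. split. assert (0 <= 2*a0/eta) by (apply Rdiv_le_0_compat; lra). lra.
    split. apply Rdiv_lt_0_compat; lra.
    intros t Ht. eapply Rbar_le_trans. apply (Hb t Ht). simpl.
    unfold rpow. destruct (Rlt_dec 0 eta) as [_|]; [|lra]. unfold Rpower.
    replace ((t - 0 - T) / T * ln eta) with (- (- ln eta / T) * t + - ln eta) by (field; lra).
    rewrite exp_plus, exp_Ropp, exp_ln by lra.
    set (E := exp (- (- ln eta / T) * t)).
    assert (0 < E) by apply exp_pos.
    assert (2 * (E * / eta) * a0 = 2 * a0 / eta * E) by (field; lra).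
    lra.
  - assert (Heq: eta = 0) by lra.
    exists (2*T), 1, 1. split; [lra|]. split; [lra|]. split; [lra|].
    intros t Ht. eapply Rbar_le_trans. apply (Hb t ltac:(lra)). simpl.
    unfold rpow. destruct (Rlt_dec 0 eta); [lra|].
    destruct (Req_EM_T ((t - 0 - T) / T) 0) as [Hz|Hz].
    + exfalso. assert (Hge: (t-0-T)/T >= 1).
      { apply Rle_ge. apply (Rmult_le_reg_r T); [lra|]. unfold Rdiv.
        rewrite Rmult_assoc, Rinv_l; lra. }
      lra.
    + pose proof (exp_pos (- (1) * t)). lra.
Qed.
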